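(* For every integer $n\ge 0$, as polynomials in $u$, $$P_{n+1}(u;0,1)=\frac{u}{2^n}\,S_n\!\left(u;0,1,-\tfrac12\right).$$ In particular, all coefficients of the polynomial $2^{-n}S_n(u;0,1,-\tfrac12)$ are integers.
   Context: Eulerian numbers: $\left\langle {n\atop k}\right\rangle$ is the number of permutations of $\{1,\dots,n\}$ with exactly $k$ ascents (indices $j$ with $a_j<a_{j+1}$). Define $P_1(u;a,b)=u-a$ and, for $n\ge1$, $P_{n+1}(u;a,b)=\sum_{k=0}^{n-1}\left\langle {n\atop k}\right\rangle (u-a)^{k+1}(u-b)^{n-k}$. The MacMahon numbers $M_{n,k}$ ($n\ge1$, $1\le k\le n$) are defined by $M_{n,1}=1$ and, for $n\ge 2$, $2\le k\le n$, $M_{n,k}=(2k-1)M_{n-1,k}+(2n-2k+1)M_{n-1,k-1}$, with $M_{n-1,n}=0$. Define $Q_n(u;a,b)=\sum_{k=1}^{n+1}M_{n+1,k}(u-a)^{n+1-k}(u-b)^{k-1}$ and $S_n(u;a,b,d)=\sum_{k=0}^{n}\binom{n}{k}(2d)^kQ_{n-k}(u;a,b)$. *)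

(* Defs.v *)
From HB Require Import structures.
From mathcomp Require Import all_boot all_order all_algebra all_fingroup.
Set Implicit Arguments. Unset Strict Implicit. Unset Printing Implicit Defensive.
Import Order.TTheory GRing.Theory Num.Theory.

(* value of a permutation of {0..n-1} at a natural index (0 outside range) *)
Definition perm_at (n : nat) (s : 'S_n) (j : nat) : nat :=
  if @insub nat (fun j => j < n) 'I_n j is Some i then val (s i) else 0.

Definition ascents (n : nat) (s : 'S_n) : nat :=
  count (fun j => perm_at s j < perm_at s j.+1) (iota 0 n.-1).

Definition eulerian (n k : nat) : nat := #|[set s : 'S_n | ascents s == k]|.

Fixpoint macmahon (n k : nat) : nat :=
  match n with
  | 0 => 0
  | n'.+1 =>
      if k == 1 then 1
      else if (k == 0) || (n < k) then 0
      else (2 * k - 1) * macmahon n' k + (2 * n - 2 * k + 1) * macmahon n' k.-1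
  end.

Local Open Scope ring_scope.

(* P_m(u;a,b), m >= 1 (P_0 is unused; set to 0) *)
Definition Ppoly (m : nat) (a b : rat) : {poly rat} :=
  match m with
  | 0%N => 0
  | 1%N => 'X - a%:P
  | n.+1 => \sum_(k < n) (eulerian n k)%:R
              *: (('X - a%:P) ^+ k.+1 * ('X - b%:P) ^+ (n - k))
  end.

Definition Qpoly (n : nat) (a b : rat) : {poly rat} :=
  \sum_(1 <= k < n.+2) (macmahon n.+1 k)%:R
     *: (('X - a%:P) ^+ (n.+1 - k) * ('X - b%:P) ^+ (k.-1)).

Definition Spoly (n : nat) (a b d : rat) : {poly rat} :=
  \sum_(k < n.+1) ('C(n, k)%:R * (2 * d) ^+ k) *: Qpoly (n - k) a b.

(* Main.v *)
Require Import Defs.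
From HB Require Import structures.
From mathcomp Require Import all_boot all_order all_algebra all_fingroup.
From mathcomp Require Import ring zify.
Import Order.TTheory GRing.Theory Num.Theory.

Fixpoint ascp (p : nat) (l : seq nat) : nat :=
  if l is y :: t then (p < y) + ascp y t else 0.
Definition asc (l : seq nat) : nat := if l is x :: t then ascp x t else 0.
Definition ins (j m : nat) (l : seq nat) : seq nat := take j l ++ m :: drop j l.

Lemma ascp_le p t : ascp p t <= size t.
Proof. elim: t p => [//|y t IH] p /=; rewrite -add1n; exact: leq_add (leq_b1 _) (IH y). Qed.

Lemma ins_sum (V : nmodType) m t : forall (f : nat -> V) p, p < m -> all (fun x => x < m) t ->
  (\sum_(j < (size t).+1) f (ascp p (ins j m t)))%R =
  (f (ascp p t) *+ ascp p t + f (ascp p t).+1 *+ ((size t).+1 - ascp p t))%R.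
Proof.
elim: t => [|y t IH] f p hp /=.
  by move=> _; rewrite big_ord1 /ins /= hp mulr0n add0r.
case/andP=> hy ht.
rewrite big_ord_recl /ins /= hp ltnNge ltnW //= add0n.
have := IH (fun a => f ((p < y) + a)) y hy ht.
rewrite /ins => ->.
have hb := ascp_le y t.
case: (p < y) => /=.
  rewrite add1n addrA -mulrS subSS; by rewrite add1n.

have E0 : forall x, (false + x)%N = x by [].
rewrite !E0 addrCA -mulrS subSn // add1n.
by rewrite [in RHS]subSn ?subSn // leqW.
Qed.

Lemma ins_sum_full (V : nmodType) (f : nat -> V) m l : all (fun x => x < m) l ->
  (\sum_(j < (size l).+1) f (asc (ins j m l)))%R =
  (f (asc l) *+ (asc l).+1 + f (asc l).+1 *+ (size l - asc l))%R.
Proof.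
case: l => [|x t] /=.
  by move=> _; rewrite big_ord1 /ins /= mulr0n addr0.
case/andP=> hx ht.
rewrite big_ord_recl /ins /= ltnNge ltnW //= add0n.
have := ins_sum V m t f x hx ht; rewrite /ins => ->.
by rewrite addrA -mulrS.
Qed.

Lemma ins_index m j l : m \notin l -> j <= size l -> index m (ins j m l) = j.
Proof.
move=> hm hj; rewrite /ins index_cat.
have -> : (m \in take j l) = false.
  by apply/negbTE; apply: contra hm; apply: mem_take.
by rewrite /= eqxx addn0 size_take_min (minn_idPl hj).
Qed.

Lemma ins_rem m j l : m \notin l -> j <= size l -> rem m (ins j m l) = l.
Proof.
move=> hm hj; rewrite remE ins_index // /ins.
have hs : size (take j l) = j by rewrite size_take_min (minn_idPl hj).
rewrite take_size_cat // drop_cat hs ltnNge leqnSn /= subSnn /=.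
by rewrite drop0 cat_take_drop.
Qed.

Lemma ins_index_rem m x : m \in x -> ins (index m x) m (rem m x) = x.
Proof.
elim: x => [//|a x IH] /=.
rewrite in_cons eq_sym; case: eqP => [-> _|ne hm] /=.
  by rewrite /ins take0 drop0.
by rewrite /ins /= -/(ins _ _ _) IH.
Qed.

Lemma perm_ins n j l : perm_eq l (iota 0 n) -> perm_eq (ins j n l) (iota 0 n.+1).
Proof.
move=> hl; rewrite /ins -cat1s perm_catCA cat_take_drop cat1s.
rewrite -addn1 iotaD add0n cats1 perm_sym perm_rcons perm_cons perm_sym //.
Qed.

Lemma perms_rec n : perm_eq (permutations (iota 0 n.+1))
  [seq ins j n l | l <- permutations (iota 0 n), j <- iota 0 n.+1].
Proof.
apply: uniq_perm; first exact: permutations_uniq.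
  apply: allpairs_uniq; [exact: permutations_uniq | exact: iota_uniq|].
  move=> [l j] [l' j'] /allpairsP [[l1 j1] [h1 h2 [-> ->]]]
    /allpairsP [[l2 j2] [h3 h4 [-> ->]]] E.
  move: E => /= E.
  move: h1 h3; rewrite !mem_permutations => h1 h3.
  have hn1 : n \notin l1 by rewrite (perm_mem h1) mem_iota ltnn andbF.
  have hn2 : n \notin l2 by rewrite (perm_mem h3) mem_iota ltnn andbF.
  move: h2 h4; rewrite !mem_iota !add0n !ltnS /= => h2 h4.
  have s1 : size l1 = n by rewrite (perm_size h1) size_iota.
  have s2 : size l2 = n by rewrite (perm_size h3) size_iota.
  have Ej : j1 = j2.
    by rewrite -(ins_index n j1 l1 hn1) ?s1 // E ins_index ?s2.
  have El : l1 = l2.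
    by rewrite -(ins_rem n j1 l1 hn1) ?s1 // E ins_rem ?s2 // -Ej.
  by rewrite Ej El.
move=> x; rewrite mem_permutations; apply/idP/idP.
  move=> hx.
  have hn : n \in x by rewrite (perm_mem hx) mem_iota add0n ltnSn.
  apply/allpairsP; exists (rem n x, index n x); split.
  - rewrite mem_permutations -(perm_cons n).
    rewrite perm_sym; apply: (perm_trans _ (perm_to_rem hn)).
    rewrite perm_sym; apply: perm_trans hx _.
    by rewrite -addn1 iotaD add0n cats1 perm_rcons.
  - by rewrite mem_iota add0n -[n.+1](size_iota 0) -(perm_size hx) index_mem.
  - by rewrite /= ins_index_rem.
case/allpairsP=> [[l j] [/= hl _ ->]].
by apply: perm_ins; rewrite -mem_permutations.
Qed.

Definition ls N (s : 'S_N) : seq nat := [seq perm_at s j | j <- iota 0 N].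
Arguments ls {N} s.

Lemma perm_at_ord N (s : 'S_N) (i : 'I_N) : perm_at s i = s i.
Proof.
rewrite /perm_at; case: insubP => [j _ /val_inj -> //|].
by rewrite ltn_ord.
Qed.
Arguments perm_at_ord {N} s i.

Lemma ascp_iota (f : nat -> nat) k : forall m,
  ascp (f m) [seq f j | j <- iota m.+1 k] = count (fun j => f j < f j.+1) (iota m k).
Proof. by elim: k => [//|k IH] m /=; rewrite IH. Qed.

Lemma asc_iota (f : nat -> nat) n :
  asc [seq f j | j <- iota 0 n] = count (fun j => f j < f j.+1) (iota 0 n.-1).
Proof. by case: n => [//|n] /=; rewrite ascp_iota. Qed.

Lemma ascents_ls N (s : 'S_N) : ascents s = asc (ls s).
Proof. by rewrite /ls asc_iota. Qed.

Lemma ls_mem N (s : 'S_N) x : (x \in ls s) = (x < N).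
Proof.
apply/mapP/idP.
  case=> j; rewrite mem_iota add0n => /andP[_ hj] ->.
  by rewrite (perm_at_ord s (Ordinal hj)).
move=> hx; exists (val ((s^-1)%g (Ordinal hx))).
  by rewrite mem_iota add0n ltn_ord.
by rewrite perm_at_ord permKV.
Qed.

Lemma ls_uniq N (s : 'S_N) : uniq (ls s).
Proof.
rewrite map_inj_in_uniq ?iota_uniq // => i j.
rewrite !mem_iota !add0n => /andP[_ hi] /andP[_ hj].
rewrite (perm_at_ord s (Ordinal hi)) (perm_at_ord s (Ordinal hj)).
by move/val_inj/perm_inj => [].
Qed.

Lemma ls_perm N (s : 'S_N) : perm_eq (ls s) (iota 0 N).
Proof.
apply: uniq_perm; [exact: ls_uniq | exact: iota_uniq |] => x.
by rewrite ls_mem mem_iota add0n.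
Qed.

Lemma ls_inj N : injective (@ls N).
Proof.
move=> s t E; apply/permP => i; apply/val_inj.
have : nth 0 (ls s) i = nth 0 (ls t) i by rewrite E.
rewrite /ls !(nth_map 0) ?size_iota ?ltn_ord // nth_iota ?ltn_ord // add0n.
by rewrite !perm_at_ord.
Qed.

Lemma ls_surj N l : perm_eq l (iota 0 N) -> exists s : 'S_N, ls s = l.
Proof.
move=> hl.
have sl : size l = N by rewrite (perm_size hl) size_iota.
have H : forall i : 'I_N, nth 0 l i < N.
  move=> i; have : nth 0 l i \in l by rewrite mem_nth ?sl.
  by rewrite (perm_mem hl) mem_iota add0n.
have ul : uniq l by rewrite (perm_uniq hl) iota_uniq.
have finj : injective (fun i : 'I_N => Ordinal (H i)).
  move=> i j [] /eqP; rewrite nth_uniq ?sl // => /eqP; exact: val_inj.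
exists (perm finj).
rewrite -[RHS](mkseq_nth 0) sl /mkseq /ls; apply/eq_in_map => j.
rewrite mem_iota add0n => /andP[_ hj].
by rewrite (perm_at_ord _ (Ordinal hj)) permE.
Qed.

Lemma sum_S_perms (V : nmodType) N (F : seq nat -> V) :
  (\sum_(s : 'S_N) F (ls s))%R = (\sum_(l <- permutations (iota 0 N)) F l)%R.
Proof.
rewrite -(big_map (@ls N) predT F); apply: perm_big.
apply: uniq_perm; [|exact: permutations_uniq|].
  by rewrite map_inj_uniq ?index_enum_uniq //; exact: ls_inj.
move=> l; rewrite mem_permutations; apply/mapP/idP.
  by case=> s _ ->; exact: ls_perm.
by case/ls_surj => s <-; exists s; rewrite ?mem_index_enum.
Qed.

Local Open Scope ring_scope.

Notation Y := ('X - (1:rat)%:P).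

Definition Wt (N a : nat) : {poly rat} := 'X^a * Y ^+ (N - a).
Definition GS N := \sum_(s : 'S_N) Wt N (ascents s).
Definition GL N := \sum_(l <- permutations (iota 0 N)) Wt N (asc l).

Lemma GS_GL N : GS N = GL N.
Proof.
rewrite /GS /GL; under eq_bigr do rewrite ascents_ls.
exact: (sum_S_perms _ N (fun l => Wt N (asc l))).
Qed.

Lemma deriv_big (I : Type) (r : seq I) (F : I -> {poly rat}) :
  (\sum_(i <- r) F i)^`() = \sum_(i <- r) (F i)^`().
Proof.
elim: r => [|i r IH]; first by rewrite !big_nil deriv0.
by rewrite !big_cons derivD IH.
Qed.


Lemma dW a b : 'X * Y * ('X^a * Y ^+ b)^`() = (a%:R * Y + b%:R * 'X) * ('X^a * Y ^+ b).
Proof.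
rewrite derivM derivXn deriv_exp derivXsubC mul1r.
move: ('X - 1%:P) => y; move: ('X : {poly rat}) => x.
case: a => [|a]; case: b => [|b] /=; rewrite ?mulr0n ?mul0r ?mulr0 ?add0r ?addr0 ?expr0 ?exprS; ring.
Qed.

Lemma W_step N a : (a <= N)%N ->
  Wt N.+1 a *+ a.+1 + Wt N.+1 a.+1 *+ (N - a) = Y * (Wt N a + 'X * (Wt N a)^`()).
Proof.
move=> ha; rewrite /Wt subSn // subSS.
have h := dW a (N - a).
rewrite !exprS.
set w := 'X^a * Y ^+ (N - a) in h *.
have -> : 'X^a * (Y * Y ^+ (N - a)) = Y * w by rewrite /w; ring.
have -> : 'X * 'X^a * Y ^+ (N - a) = 'X * w by rewrite /w; ring.
clearbody w.
have -> : Y * (w + 'X * w^`()) = Y * w + 'X * Y * w^`() :> {poly rat}.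
  by rewrite mulrDr mulrA (mulrC Y 'X).
rewrite h; clear h; move: (Y) ('X : {poly rat}) w => y x w0; ring.
Qed.

Lemma GL_rec N : GL N.+1 = Y * (GL N + 'X * (GL N)^`()).
Proof.
rewrite /GL (perm_big _ (perms_rec N)) big_allpairs_dep.
rewrite deriv_big mulr_sumr -big_split mulr_sumr.
rewrite !big_seq; apply: eq_bigr => l; rewrite mem_permutations => hl.
have sl : size l = N by rewrite (perm_size hl) size_iota.
have hall : all (fun x => x < N)%N l.
  by apply/allP => x; rewrite (perm_mem hl) mem_iota add0n.
have E : iota 0 N.+1 = index_iota 0 N.+1 by rewrite /index_iota subn0.
rewrite E big_mkord.
have := ins_sum_full _ (fun a => Wt N.+1 a) N l hall; rewrite sl => ->.
apply: W_step.
have := ascp_le; case: l hl sl hall => [|x t] //= _ sl _.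
by move=> H; rewrite -sl ltnW // ltnS H.
Qed.

Lemma M0 n : macmahon n 0 = 0%N.
Proof. by case: n. Qed.

Lemma Mbig n k : (n < k)%N -> macmahon n k = 0%N.
Proof.
case: n => [//|n] /= h.
have -> : (k == 1%N) = false by apply/negbTE; move: h; case: k => [|[|k]].
by rewrite h orbT.
Qed.

Lemma Mrec n k : macmahon n.+2 k =
  ((2 * k - 1) * macmahon n.+1 k + (2 * n.+2 - 2 * k + 1) * macmahon n.+1 k.-1)%N.
Proof.
case: k => [|[|k]]; first by rewrite !M0 !muln0.
  by rewrite /= muln0 addn0.
case: (ltnP n.+2 k.+2) => h.
  rewrite Mbig // Mbig ?(ltnW h) // Mbig //=; lia.
rewrite /=.
have -> : (n.+2 < k.+2)%N = false by apply/negbTE; rewrite -leqNgt.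
by [].
Qed.

Definition L (f : {poly rat}) : {poly rat} := (2%:R * 'X - 1) * f + 2%:R * ('X * Y) * f^`().
Definition V m k : {poly rat} := 'X^(m.+1 - k) * Y ^+ k.-1.

Lemma L_lin c p q : L (c *: p + q) = c *: L p + L q.
Proof.
rewrite /L derivD derivZ !mulrDr -!scalerAr scalerDr.
by rewrite addrACA.
Qed.

Lemma L0 : L 0 = 0.
Proof. by rewrite /L deriv0 !mulr0 addr0. Qed.

Lemma L_sum (I : Type) (r : seq I) (c : I -> rat) (p : I -> {poly rat}) :
  L (\sum_(i <- r) c i *: p i) = \sum_(i <- r) c i *: L (p i).
Proof.
elim: r => [|i r IH]; first by rewrite !big_nil L0.
by rewrite !big_cons L_lin IH.
Qed.

Lemma LV m k : (1 <= k <= m.+1)%N -> L (V m k) =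
  (2 * k - 1)%:R *: V m.+1 k + (2 * m.+2 - 2 * k.+1 + 1)%:R *: V m.+1 k.+1.
Proof.
case: k => [//|k] /= hk.
have [d ->] : exists d, m = (k + d)%N by exists (m - k)%N; lia.
rewrite /L /V /=.
have -> : ((k + d).+1 - k.+1 = d)%N by lia.
have -> : ((k + d).+2 - k.+1 = d.+1)%N by lia.
have -> : ((k + d).+2 - k.+2 = d)%N by lia.
have -> : (2 * k.+1 - 1 = 2 * k + 1)%N by lia.
have -> : (2 * (k + d).+2 - 2 * k.+2 + 1 = 2 * d + 1)%N by lia.
rewrite !scaler_nat.
have h := dW d k.
rewrite exprS !polyC1 in h *.
rewrite -(mulrA 'X) (exprS ('X - 1) k) (mulrCA 'X^d).
move: h; move: ('X^d * ('X - 1) ^+ k) => w h.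
have -> : 2%:R * ('X * ('X - 1)) * w^`() = 2%:R * ('X * ('X - 1) * w^`()) :> {poly rat}
  by rewrite !mulrA.
rewrite h; ring.
Qed.

Definition Qs m := \sum_(k < m.+3) (macmahon m.+1 k)%:R *: V m k.

Lemma Qpoly_Qs m : Qpoly m 0 1 = Qs m.
Proof.
rewrite /Qpoly /Qs -(big_mkord (fun _ => true) (fun k => (macmahon m.+1 k)%:R *: V m k)) big_ltn // M0 mulr0n scale0r add0r.
rewrite [RHS]big_nat_recr // Mbig // mulr0n scale0r Monoid.mulm1.
by apply: eq_bigr => k _; rewrite /V polyC0 subr0.
Qed.

Lemma term_eq m (k : nat) : (k < m.+3)%N ->
  (macmahon m.+1 k)%:R *: L (V m k) =
  ((2 * k - 1) * macmahon m.+1 k)%:R *: V m.+1 k +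
  ((2 * m.+2 - 2 * k.+1 + 1) * macmahon m.+1 k)%:R *: V m.+1 k.+1.
Proof.
move=> hk.
case: k hk => [|k] hk; first by rewrite M0 !muln0 !mulr0n !scale0r addr0.
case: (ltnP k m.+1) => h.
  rewrite LV ?h // scalerDr !scalerA -!natrM; congr (_ *: _ + _ *: _); congr (_%:R); lia.
have -> : k = m.+1 by lia.
by rewrite Mbig // !muln0 !mulr0n !scale0r addr0.
Qed.

Lemma sumD (I : Type) (r : seq I) (F G : I -> {poly rat}) :
  \sum_(i <- r) (F i + G i) = \sum_(i <- r) F i + \sum_(i <- r) G i.
Proof. exact: big_split. Qed.

Lemma Qs_rec m : Qs m.+1 = L (Qs m).
Proof.
rewrite /Qs L_sum.
under eq_bigr do rewrite Mrec natrD scalerDl.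
rewrite sumD [X in X + _]big_ord_recr [X in _ + X]big_ord_recl.
rewrite Mbig // muln0 mulr0n scale0r Monoid.mulm1.
rewrite (_ : macmahon m.+1 (nat_of_ord (@ord0 m.+3)).-1 = 0%N) // muln0 mulr0n scale0r.
rewrite Monoid.mul1m -sumD; apply: eq_bigr => k _.
by rewrite term_eq.
Qed.

Definition T (f : {poly rat}) : {poly rat} := L f - f.

Lemma LB p q : L (p - q) = L p - L q.
Proof. rewrite /L derivB; ring. Qed.

Lemma LZ c p : L (c *: p) = c *: L p.
Proof. by rewrite /L derivZ -!scalerAr scalerDr. Qed.

Lemma TB p q : T (p - q) = T p - T q.
Proof. rewrite /T LB; ring. Qed.

Lemma TZ c p : T (c *: p) = c *: T p.
Proof. by rewrite /T LZ scalerBr. Qed.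

Lemma iterB j p q : iter j T (p - q) = iter j T p - iter j T q.
Proof. by elim: j => [//|j IH] /=; rewrite IH TB. Qed.

Lemma iterZ j c p : iter j T (c *: p) = c *: iter j T p.
Proof. by elim: j => [//|j IH] /=; rewrite IH TZ. Qed.

Definition cb n k : rat := 'C(n, k)%:R * (-1) ^+ k.

Lemma binom n : forall g,
  \sum_(k < n.+1) cb n k *: iter (n - k) L g = iter n T g.
Proof.
elim: n => [|n IH] g.
  by rewrite big_ord1 /cb /= expr0 mulr1 scale1r.
rewrite iterSr {2}/T iterB -!IH.
rewrite [LHS]big_ord_recl /cb bin0 expr0 mulr1 scale1r subn0.
have E2 : \sum_(k < n.+1) ('C(n.+1, lift ord0 k)%:R * (-1) ^+ lift ord0 k) *:
      iter (n.+1 - lift ord0 k) L g =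
    \sum_(k < n.+1) ('C(n, k.+1)%:R * (-1) ^+ k.+1) *: iter (n - k) L g -
    \sum_(k < n.+1) ('C(n, k)%:R * (-1) ^+ k) *: iter (n - k) L g.
  rewrite -sumrB; apply: eq_bigr => k _.
  rewrite lift0 binS natrD mulrDl scalerDl subSS exprS mulN1r mulrN scaleNr.
  by rewrite mulrN scaleNr.
rewrite E2 addrA; congr (_ - _).
rewrite [in RHS]big_ord_recl subn0 bin0 expr0 mulr1 scale1r -iterSr.
congr (_ + _).
rewrite big_ord_recr /= bin_small // mul0r scale0r addr0.
apply: eq_bigr => k _.
by rewrite /bump leq0n add1n -iterSr subnSK.
Qed.

Lemma Qs0 : Qs 0 = 1.
Proof.
rewrite /Qs !big_ord_recl big_ord0 /= !scale0r scale1r add0r !addr0.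
by rewrite /V /bump /= expr0 mulr1.
Qed.

Lemma Qpoly_iter m : Qpoly m 0 1 = iter m L 1.
Proof.
rewrite Qpoly_Qs; elim: m => [|m IH]; first exact: Qs0.
by rewrite Qs_rec IH.
Qed.

Lemma Spoly_T n : Spoly n 0 1 (- (1 / 2)) = iter n T 1.
Proof.
have E : 2 * - (1 / 2) = -1 :> rat by rewrite mulrN div1r mulfV.
rewrite /Spoly E; rewrite -binom; apply: eq_bigr => k _.
by rewrite Qpoly_iter.
Qed.

Lemma GL0 : GL 0 = 1.
Proof. by rewrite /GL /= big_seq1 /Wt expr0 mulr1. Qed.

Lemma T_GL n : T (GL n) = 2 *: GL n.+1.
Proof.
rewrite GL_rec /T /L polyC1.
move: (GL n) (GL n)^`() => p q.
rewrite -[2 *: _]mul_polyC.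
have -> : (2 : rat)%:P = 2 by rewrite -polyC_natr.
ring.
Qed.

Lemma iterT_GL n : iter n T 1 = 2 ^+ n *: GL n.
Proof.
elim: n => [|n IH]; first by rewrite GL0 expr0 scale1r.
by rewrite iterS IH TZ T_GL scalerA exprSr.
Qed.

Lemma Key n : (2 ^+ n)^-1 *: Spoly n 0 1 (- (1 / 2)) = GS n.
Proof.
rewrite Spoly_T iterT_GL scalerA mulVf ?scale1r ?GS_GL //.
by rewrite expf_neq0.
Qed.


Lemma asc_lt N (s : 'S_N.+1) : (ascents s < N.+1)%N.
Proof. by rewrite /ascents ltnS (leq_trans (count_size _ _)) // size_iota. Qed.

Lemma GS_part N : GS N.+1 = \sum_(k < N.+1) (eulerian N.+1 k)%:R *: Wt N.+1 k.
Proof.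
rewrite /GS (partition_big (fun s : 'S_N.+1 => Ordinal (asc_lt N s)) xpredT) //.
apply: eq_bigr => k _.
rewrite (eq_bigr (fun _ => Wt N.+1 k)); last by move=> s /andP[_ /eqP <-].
rewrite (eq_bigl (fun s => s \in [set s : 'S_N.+1 | ascents s == k])); last first.
  by move=> s; rewrite inE -val_eqE.
by rewrite sumr_const scaler_nat.
Qed.

Lemma Ppoly_X n : Ppoly n.+1 0 1 = 'X * GS n.
Proof.
case: n => [|N].
  by rewrite /Ppoly GS_GL GL0 polyC0 subr0 mulr1.
rewrite GS_part /Ppoly mulr_sumr; apply: eq_bigr => k _.
by rewrite -scalerAr /Wt polyC0 subr0 exprS mulrA.
Qed.

Lemma GL_int n : GL n \is a polyOver Num.int.
Proof.
elim: n => [|n IH]; first by rewrite GL0 -polyC1 polyOverC rpred1.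
rewrite GL_rec; apply: polyOver_mulr_2closed; first by rewrite polyOverXsubC rpred1.
have hd : (GL n)^`() \is a polyOver Num.int by exact: polyOver_deriv.
have hm : 'X * (GL n)^`() \is a polyOver Num.int.
  by apply: polyOver_mulr_2closed => //; exact: polyOverX.
apply/polyOverP => i; rewrite coefD rpredD //; exact: (polyOverP _).
Qed.

Theorem mainTheorem8 (n : nat) :
  Ppoly n.+1 0 1 = 'X * ((2 ^+ n)^-1 *: Spoly n 0 1 (- (1 / 2)))
  /\ (forall i : nat, ((2 ^+ n)^-1 *: Spoly n 0 1 (- (1 / 2)))`_i \in Num.int).
Proof.
rewrite Key; split; first exact: Ppoly_X.
by move=> i; rewrite GS_GL; apply/polyOverP/GL_int.
Qed.
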